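(* Let $m\in\mathbb Z^+$, let $\sigma$ be a linear permutation of $\mathbb Z_m$, and let $\zeta_m$ be a primitive $m$-th root of unity. Suppose one of the following holds: (i) $q$ is a prime with $q=mf+1$ for some even integer $f$; let $\alpha$ be a generator of $\mathbb Z_q^*$, $D_k=\{\alpha^{mi+k}:0\le i\le f-1\}$, and let $\underline a$ be the sequence of period $q$ with $a_0=0$ and $a_i=\zeta_m^k$ for $i\in D_{\sigma(k)}$; (ii) $q=2p$ for a prime $p$ with $q=mf+l$, $f$ even and $l=p+1$; let $\alpha$ be a generator of the cyclic group $\mathbb Z_q^*$, $D_k=\{\alpha^{mi+k}:0\le i\le f-1\}$, and let $\underline a$ be the sequence of period $q$ with $a_i=\zeta_m^k$ for $i\in D_{\sigma(k)}$ and $a_i=0$ for $i\notin\mathbb Z_q^*$. Then $\underline a$ is symmetric except for $a_0$, i.e. $a_i=a_{q-i}$ for all $1\le i\le q-1$.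
   Context: A linear permutation of $\mathbb Z_m$ is a map $x\mapsto ux+v\pmod m$ with $\gcd(u,m)=1$. The sequences defined in (i) and (ii) are called almost $m$-ary $\sigma$-sequences. *)

(* Defs.v *)
From mathcomp Require Import all_boot all_order all_algebra all_field.
Set Implicit Arguments. Unset Strict Implicit. Unset Printing Implicit Defensive.
Import GRing.Theory Num.Theory.
Local Open Scope ring_scope.

(* Linear permutation of Z_m : k |-> u k + v (mod m), with gcd(u,m) = 1.
   Elements of Z_m are represented by naturals 0 <= k < m. *)
Definition linperm (m u v : nat) (k : nat) : nat := ((u * k + v) %% m)%N.

Definition unit_generator (q alpha : nat) : Prop :=
  coprime alpha q /\
  forall x : nat, (x < q)%N -> coprime x q -> exists e : nat, x = alpha ^ e %[mod q].

Definition inD (q m f alpha k x : nat) : Prop :=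
  exists2 i : nat, (i < f)%N & x = alpha ^ (m * i + k) %[mod q].

Definition has_period (q : nat) (a : nat -> algC) : Prop :=
  forall i : nat, a (i + q)%N = a i.

Definition almost_sigma_case1 (m u v : nat) (zeta : algC) (q : nat)
    (a : nat -> algC) : Prop :=
  exists f alpha : nat,
    [/\ prime q, q = (m * f + 1)%N, ~~ odd f, unit_generator q alpha &
       [/\ has_period q a, a 0%N = 0 &
        forall i k : nat, (i < q)%N -> (k < m)%N ->
          inD q m f alpha (linperm m u v k) i -> a i = zeta ^+ k]].

Definition almost_sigma_case2 (m u v : nat) (zeta : algC) (q : nat)
    (a : nat -> algC) : Prop :=
  exists p f alpha : nat,
    [/\ prime p, q = (2 * p)%N, q = (m * f + (p + 1))%N, ~~ odd f &
       [/\ unit_generator q alpha, has_period q a,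
        forall i k : nat, (i < q)%N -> (k < m)%N ->
          inD q m f alpha (linperm m u v k) i -> a i = zeta ^+ k &
        forall i : nat, (i < q)%N -> ~~ coprime i q -> a i = 0]].

(* Main.v *)
Require Import Defs.
From mathcomp Require Import all_boot all_order all_algebra all_field.
From mathcomp Require Import cyclic zify.
Import GRing.Theory Num.Theory.
Local Open Scope ring_scope.
Local Open Scope nat_scope.

Lemma linperm_onto (m u v s : nat) : (0 < m)%N -> coprime u m -> (s < m)%N ->
  exists2 k, (k < m)%N & linperm m u v k = s.
Proof.
move=> m0 cu sm.
pose g (k : 'I_m) : 'I_m := Ordinal (ltn_pmod (u * k + v) m0).
have ginj : injective g.
  move=> k1 k2 /(congr1 val) /= /eqP.
  rewrite eqn_modDr => H; apply/val_inj => /=.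
  wlog le12 : k1 k2 H / (k1 <= k2)%N.
    move=> W; case: (leqP k1 k2) => [|/ltnW] h; first exact: W.
    by apply/esym/W => //; rewrite eq_sym.
  move: H; rewrite eq_sym eqn_mod_dvd ?leq_mul2l ?le12 ?orbT // -mulnBr.
  rewrite Gauss_dvdr; last by rewrite coprime_sym.
  move=> hd; case: (posnP (k2 - k1)) => [z|p].
    by apply/eqP; rewrite eqn_leq le12 -subn_eq0 z.
  have := dvdn_leq p hd; have := ltn_ord k2; lia.
have /codomP [k hk] := inj_card_onto ginj (leqnn _) (Ordinal sm).
by exists k => //; move/(congr1 val): hk => /= ->.
Qed.

Lemma pow_red (al q h E : nat) : al ^ h = 1 %[mod q] -> al ^ E = al ^ (E %% h) %[mod q].
Proof.
move=> H; rewrite {1}(divn_eq E h) expnD (mulnC (E %/ h)) expnM -modnMml.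
by rewrite -(modnXm (E %/ h) q (al ^ h)) H modnXm exp1n modnMml mul1n.
Qed.

Lemma card_units (q : nat) : #|[set x : 'I_q | coprime q x]| = totient q.
Proof.
rewrite totient_count_coprime big_mkord -sum1dep_card.
rewrite [RHS](bigID (fun x : 'I_q => coprime q x)) /=.
rewrite [X in (_ + X)%N]big1 ?addn0.
  by apply: eq_bigr => i ->.
by move=> i /negbTE ->.
Qed.

Lemma half_not_one (q al h : nat) : 1 < q -> unit_generator q al ->
  totient q = h + h -> 0 < h -> al ^ h %% q != 1.
Proof.
move=> q1 [cal ug] tq h0; apply/negP => /eqP H.
have H' : al ^ h = 1 %[mod q] by rewrite H modn_small.
have q0 : 0 < q by apply: ltnW.
pose g (e : 'I_h) : 'I_q := Ordinal (ltn_pmod (al ^ e) q0).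
have sub : [set x : 'I_q | coprime q x] \subset g @: [set: 'I_h].
  apply/subsetP => x; rewrite inE => cx.
  have cx' : coprime x q by rewrite coprime_sym.
  have [E hE] := ug x (ltn_ord x) cx'.
  apply/imsetP; exists (Ordinal (ltn_pmod E h0)) => //; apply: val_inj => /=.
  by rewrite -(pow_red _ _ _ E H') -hE modn_small.
have := subset_leq_card sub; rewrite card_units tq.
have := leq_imset_card g [set: 'I_h]; rewrite cardsT card_ord => A B.
move: (leq_trans B A) h0; clear; lia.
Qed.

Lemma sq1_dvd q x : 0 < x -> 1 < q -> x * x %% q = 1 -> q %| (x - 1) * (x + 1).
Proof.
move=> x0 q1 H.
have -> : (x - 1) * (x + 1) = x * x - 1 by nia.
rewrite -eqn_mod_dvd; last by nia.
by rewrite H modn_small.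
Qed.

Lemma sq1_prime q x : prime q -> x < q -> 0 < x -> x * x %% q = 1 -> x != 1 -> x = q - 1.
Proof.
move=> pq xq x0 H n1; have q1 := prime_gt1 pq.
have := sq1_dvd _ _ x0 q1 H; rewrite Euclid_dvdM // => /orP [] hd.
  case: (posnP (x - 1)) => [z|p]; first by move: n1; lia.
  have := dvdn_leq p hd; lia.
have h1 : 0 < x + 1 by rewrite addn1.
have := dvdn_leq h1 hd; lia.
Qed.

Lemma sq1_2p p x : prime p -> odd p -> x < 2 * p -> odd x -> x * x %% (2 * p) = 1 ->
  x != 1 -> x = 2 * p - 1.
Proof.
move=> pp op xq ox H n1; have p1 := prime_gt1 pp.
have x0 : 0 < x by case: x ox {xq H n1}.
have hx : x %% 2 = 1 by rewrite modn2 ox.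
have hp : p %% 2 = 1 by rewrite modn2 op.
have q1 : 1 < 2 * p by lia.
have := dvdn_trans (dvdn_mull 2 (dvdnn p)) (sq1_dvd _ _ x0 q1 H).
rewrite Euclid_dvdM // => /orP [] /dvdnP [k hk].
  case: k hk => [|[|k]] hk; move: n1; lia.
case: k hk => [|[|[|k]]] hk; move: n1; lia.
Qed.

Lemma coprime_opp q i : i <= q -> coprime (q - i) q = coprime i q.
Proof.
move=> iq; have [r e] : exists r, q = r + i by exists (q - i); rewrite subnK.
by rewrite e addnK /coprime gcdnDl gcdnDr gcdnC.
Qed.

Lemma a_eq (m u v f q al : nat) (zeta : algC) (a : nat -> algC) :
  0 < m -> coprime u m -> 0 < f -> al ^ (m * f) = 1 %[mod q] ->
  (forall i k : nat, i < q -> k < m ->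
     inD q m f al (linperm m u v k) i -> a i = (zeta ^+ k)%R) ->
  forall x y E1 E2, x < q -> y < q -> x = al ^ E1 %[mod q] -> y = al ^ E2 %[mod q] ->
  E1 %% m = E2 %% m -> a x = a y.
Proof.
move=> m0 cu f0 P1 H x y E1 E2 xq yq hx hy hE.
have [k km hk] := linperm_onto m u v (E1 %% m) m0 cu (ltn_pmod _ m0).
have gen : forall z E, z < q -> z = al ^ E %[mod q] -> E %% m = E1 %% m -> a z = (zeta ^+ k)%R.
  move=> z E zq hz hE'; apply: H => //; rewrite hk -hE'.
  apply: (ex_intro2 _ _ ((E %% (m * f)) %/ m)).
    by rewrite ltn_divLR // (mulnC f m) ltn_pmod // muln_gt0 m0.
  rewrite hz (pow_red _ _ _ E P1) {1}(divn_eq (E %% (m * f)) m).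
  by rewrite (modn_dvdm _ (dvdn_mulr f (dvdnn m))) (mulnC _ m).
by rewrite (gen x E1) // (gen y E2).
Qed.

Lemma neg_step q al h i E : 1 < q -> al ^ h %% q = q - 1 -> 1 <= i -> i < q ->
  i = al ^ E %[mod q] -> q - i = al ^ (E + h) %[mod q].
Proof.
move=> q1 hx i1 iq hE.
rewrite expnD -modnMml -hE -modnMmr hx (modn_small iq).
have -> : i * (q - 1) = (i - 1) * q + (q - i) by nia.
by rewrite modnMDl.
Qed.

Lemma x_facts q al h : 1 < q -> coprime al q -> al ^ (h + h) = 1 %[mod q] ->
  [/\ al ^ h %% q < q, 0 < al ^ h %% q, coprime (al ^ h %% q) q &
      (al ^ h %% q) * (al ^ h %% q) %% q = 1].
Proof.
move=> q1 ca E.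
have cx : coprime (al ^ h %% q) q by rewrite coprime_modl coprimeXl.
split => //.
- by rewrite ltn_pmod // ltnW.
- case: (posnP (al ^ h %% q)) => [z|//]; move: cx; rewrite z /coprime gcd0n => /eqP; lia.
- by rewrite modnMml modnMmr -expnD E modn_small.
Qed.

Local Open Scope ring_scope.

Theorem proposition8 (m u v : nat) (zeta : algC) (q : nat) (a : nat -> algC) :
  (0 < m)%N -> coprime u m -> m.-primitive_root zeta ->
  almost_sigma_case1 m u v zeta q a \/ almost_sigma_case2 m u v zeta q a ->
  forall i : nat, (1 <= i <= q - 1)%N -> a i = a (q - i)%N.
Proof.
move=> m0 cu _ [C1|C2] i /andP[i1 iq].
- case: C1 => f [al [pq qdef fe [cal ug] [per a0 H]]].
  have q1 := prime_gt1 pq.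
  have ff : f = (f./2 + f./2)%N by rewrite addnn -[LHS]odd_double_half (negbTE fe).
  have f0 : (0 < f)%N by move: q1; rewrite qdef; case: (f) => //; rewrite muln0.
  have [h hdef] : exists h, h = (m * f./2)%N by exists (m * f./2)%N.
  have hh : (m * f = h + h)%N by rewrite hdef -mulnDr -ff.
  have h0 : (0 < h)%N by rewrite hdef muln_gt0 m0 /=; move: ff f0; clear; lia.
  have tot : totient q = (h + h)%N by rewrite totient_prime // qdef addn1 /= hh.
  have eul := Euler_exp_totient cal; rewrite tot in eul.
  have [xq x0 cx xx] := x_facts _ _ h q1 cal eul.
  have xn1 := half_not_one _ _ _ q1 (conj cal ug) tot h0.
  have hx := sq1_prime _ _ pq xq x0 xx xn1.
  have iq' : (i < q)%N by move: iq i1; clear; lia.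
  have ci : coprime i q.
    rewrite coprime_sym prime_coprime //; apply/negP => /dvdn_leq; move: iq i1; clear; lia.
  have [E hE] := ug i iq' ci.
  apply: (a_eq m u v f q al zeta a m0 cu f0 _ H i (q - i) E (E + h)) => //.
  + by rewrite hh.
  + by move: i1 q1; clear; lia.
  + exact: (neg_step q al h i E q1 hx i1 iq' hE).
  + by rewrite hdef (mulnC m) (addnC E) modnMDl.
- case: C2 => p [f [al [pp qdef qdef2 fe [[cal ug] per H Z]]]].
  have p1 := prime_gt1 pp.
  have q1 : (1 < q)%N by move: qdef p1; clear; lia.
  have pdef : p = (m * f + 1)%N by move: qdef qdef2; clear; lia.
  have ff : f = (f./2 + f./2)%N by rewrite addnn -[LHS]odd_double_half (negbTE fe).
  have f0 : (0 < f)%N by move: p1; rewrite pdef; case: (f) => //; rewrite muln0.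
  have [h hdef] : exists h, h = (m * f./2)%N by exists (m * f./2)%N.
  have hh : (m * f = h + h)%N by rewrite hdef -mulnDr -ff.
  have h0 : (0 < h)%N by rewrite hdef muln_gt0 m0 /=; move: ff f0; clear; lia.
  have op : odd p by rewrite pdef hh addn1 /= addnn odd_double.
  have tot : totient q = (h + h)%N.
    rewrite qdef totient_coprime ?coprime2n // (totient_prime pp) (totient_prime (isT : prime 2)).
    by rewrite mul1n pdef addn1 /= hh.
  have iq' : (i < q)%N by move: iq i1; clear; lia.
  case ci : (coprime i q); last first.
    rewrite Z // ?ci // Z //; first by move: iq' i1; clear; lia.
    by rewrite coprime_opp ?ci //; move: iq'; clear; lia.
  have eul := Euler_exp_totient cal; rewrite tot in eul.
  have [xq x0 cx xx] := x_facts _ _ h q1 cal eul.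
  have xn1 := half_not_one _ _ _ q1 (conj cal ug) tot h0.
  have ox : odd (al ^ h %% q).
    by move: cx; rewrite qdef coprimeMr coprimen2 => /andP[].
  have hx : (al ^ h %% q = q - 1)%N.
    move: xq ox xx xn1; rewrite qdef => xq ox xx xn1; exact: sq1_2p.
  have [E hE] := ug i iq' ci.
  apply: (a_eq m u v f q al zeta a m0 cu f0 _ H i (q - i) E (E + h)) => //.
  + by rewrite hh.
  + by move: i1 q1; clear; lia.
  + exact: (neg_step q al h i E q1 hx i1 iq' hE).
  + by rewrite hdef (mulnC m) (addnC E) modnMDl.
Qed.
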